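(* For $\beta>0$ consider the $(\beta,S)$-coalescent and let $\lambda_n$ denote its total coalescence rate when there are $n$ blocks. If $\beta\in(0,1)$, $$\lim_{n\to\infty}n^{2(\beta-1)}\lambda_n=\frac{2^{\beta-1}\Gamma(\beta)}{1-\beta}.$$ If $\beta=1$, $$\lim_{n\to\infty}\frac{\lambda_n}{\log n}=2.$$
   Context: For $\beta>0$, the $(\beta,S)$-coalescent is the exchangeable coalescent (partition-valued Markov process) described as follows: whenever there are $b$ blocks, for each $k\in\mathbb{N}$, at rate $k^{-\beta}$ all current blocks are thrown independently and uniformly at random into $k$ boxes and all blocks in the same box merge (there is no Kingman/pairwise component). The total coalescence rate $\lambda_n$ is the total rate at which an event changing the partition occurs when there are $n$ blocks; equivalently $\lambda_n=\sum_{k\ge1}k^{-\beta}\,\mathbb{P}(\mathcal C^k_n)$, where $\mathcal C^k_n$ is the event that, when $n$ balls are thrown independently and uniformly into $k$ boxes, at least two balls land in the same box. *)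

(* Defs.v *)
From mathcomp Require Import all_boot.
From Stdlib Require Import Reals.

Set Implicit Arguments.
Unset Strict Implicit.

(* P(C^k_n): probability that n balls thrown independently and uniformly into
   k boxes produce a collision, i.e. the proportion of non-injective maps
   'I_n -> 'I_k among all k^n maps. *)
Definition coll_prob (n k : nat) : R :=
  Rdiv (INR #|[set f : {ffun 'I_n -> 'I_k} | ~~ injectiveb f]|)
       (INR #|{ffun 'I_n -> 'I_k}|).

Definition is_total_rate (beta : R) (lam : nat -> R) : Prop :=
  forall n : nat,
    infinite_sum
      (fun i : nat => Rmult (Rpower (INR i.+1) (Ropp beta)) (coll_prob n i.+1))
      (lam n).

Definition is_Gamma (beta g : R) : Prop :=
  forall eps : R, Rlt 0 eps ->
    exists delta M : R, Rlt 0 delta /\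
      forall (a b : R), Rlt 0 a -> Rlt a delta -> Rlt M b ->
        forall pr : Riemann_integrable
                      (fun t => Rmult (Rpower t (Rminus beta 1)) (exp (Ropp t))) a b,
          Rlt (Rabs (Rminus (RiemannInt pr) g)) eps.

(* Main.v *)
Require Import Defs.
From Stdlib Require Import Reals Lra Lia Psatz ZArith.
From mathcomp Require Import all_boot.
From Coquelicot Require Import Coquelicot.
Open Scope R_scope.

Lemma div_ge0 a b : 0 <= a -> 0 < b -> 0 <= a / b.
Proof. move=> h1 h2; rewrite Rdiv_def; apply: Rmult_le_pos => //; apply: Rlt_le; by apply: Rinv_0_lt_compat. Qed.
Lemma div_le_l a b c : 0 < c -> a <= b * c -> a / c <= b.
Proof. move=> h1 h2. have -> : b = (b * c) / c by field; lra.
rewrite !Rdiv_def; apply: Rmult_le_compat_r => //; apply: Rlt_le; by apply: Rinv_0_lt_compat. Qed.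
Lemma div_le_r a b c : 0 < c -> b * c <= a -> b <= a / c.
Proof. move=> h1 h2. have -> : b = (b * c) / c by field; lra.
rewrite !Rdiv_def; apply: Rmult_le_compat_r => //; apply: Rlt_le; by apply: Rinv_0_lt_compat. Qed.

Lemma ln_le_sub1 y : 0 < y -> ln y <= y - 1.
Proof. move=> hy. have := exp_ineq1_le (ln y). rewrite exp_ln //. lra. Qed.

Lemma exp_le x y : x <= y -> exp x <= exp y.
Proof. move=> h; case: (Rle_lt_or_eq_dec _ _ h) => h'.
  apply: Rlt_le; exact: exp_increasing. by rewrite h'; lra. Qed.

Lemma bern x c : 0 < x -> 0 <= c <= 1 -> Rpower x c <= 1 + c * (x - 1).
Proof.
move=> hx hc.
have [A hAd] : exists A, A = 1 + c * (x - 1) by eexists.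
rewrite -hAd.
have hA : 0 < A by rewrite hAd; nra.
have hiA : 0 < / A by apply: Rinv_0_lt_compat.
have h1 := ln_le_sub1 (x * / A) ltac:(nra).
have h2 := ln_le_sub1 (/ A) ltac:(apply: Rinv_0_lt_compat; lra).
rewrite ln_mult // ln_Rinv // in h1. rewrite ln_Rinv // in h2.
have key : c * ln x <= ln A.
  have e : c * (x * / A - 1) + (1 - c) * (/ A - 1) = 0.
    have -> : c * (x * / A - 1) + (1 - c) * (/ A - 1) = (c * x + 1 - c) * / A - 1 by ring.
    have -> : c * x + 1 - c = A by rewrite hAd; ring.
    rewrite Rinv_r; lra.
  nra.
rewrite /Rpower. rewrite -(exp_ln A hA). apply: exp_le. lra.
Qed.

Fixpoint ssum (f : nat -> R) (K : nat) : R :=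
  match K with O => 0 | S K' => ssum f K' + f (S K') end.

Lemma Rpower_div y z c : 0 < y -> 0 < z -> Rpower (y * / z) c = Rpower y c * / Rpower z c.
Proof.
move=> hy hz; rewrite /Rpower ln_mult //; last by apply: Rinv_0_lt_compat.
rewrite ln_Rinv // -exp_Ropp -exp_plus; congr exp; ring.
Qed.

Lemma Rpower_m1 y c : 0 < y -> Rpower y (c - 1) = Rpower y c * / y.
Proof.
move=> hy; rewrite /Rpower -(exp_ln y hy) -exp_Ropp -exp_plus exp_ln //; congr exp; ring.
Qed.

Lemma Rpower_pos y c : 0 < Rpower y c.
Proof. rewrite /Rpower; apply: exp_pos. Qed.

Definition w (b : R) (k : nat) : R := Rpower (INR k) (- b).

Lemma Hup b K : 0 < b < 1 -> ssum (w b) K <= Rpower (INR K) (1 - b) / (1 - b).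
Proof.
move=> hb.
have hg : 0 < 1 - b by lra.
elim: K => [|K IH].
  rewrite /=. apply: div_ge0; [apply: Rlt_le; apply: Rpower_pos| lra].
case: K IH => [|K] IH.
  rewrite /= /w Rplus_0_l /Rpower ln_1 !Rmult_0_r exp_0.
  apply: div_le_r => //; lra.
change (ssum (w b) K.+2) with (ssum (w b) K.+1 + w b K.+2).
set y := INR K.+2. set x := INR K.+1.
have hx : 0 < x by apply: lt_0_INR; lia.
have hy : y = x + 1 by rewrite /y /x (S_INR K.+1).
have hy0 : 0 < y by lra.
have hb' := bern (x * / y) (1 - b) ltac:(apply: Rmult_lt_0_compat => //; apply: Rinv_0_lt_compat; lra) ltac:(lra).
rewrite Rpower_div // in hb'.
have e1 : w b K.+2 = Rpower y (1 - b) * / y.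
  rewrite /w -/y -Rpower_m1 //; congr Rpower; ring.
rewrite e1.
have hpy := Rpower_pos y (1 - b).
have hpx := Rpower_pos x (1 - b).
have : Rpower x (1 - b) <= Rpower y (1 - b) * (1 + (1 - b) * (x * / y - 1)).
  have := Rmult_le_compat_l (Rpower y (1 - b)) _ _ (Rlt_le _ _ hpy) hb'.
  by rewrite -Rmult_assoc (Rmult_comm _ (Rpower x _)) Rmult_assoc Rinv_r ?Rmult_1_r; lra.
have -> : x * / y - 1 = - / y by rewrite hy; field; lra.
move=> h.
have : ssum (w b) K.+1 <= Rpower x (1 - b) / (1 - b) by exact: IH.
move=> IH'.
have -> : Rpower y (1 - b) / (1 - b) = Rpower y (1 - b) * (1 + (1 - b) * - / y) / (1 - b) + Rpower y (1 - b) * / y by field; lra.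
have : Rpower x (1 - b) / (1 - b) <= Rpower y (1 - b) * (1 + (1 - b) * - / y) / (1 - b).
  rewrite !Rdiv_def; apply: Rmult_le_compat_r => //; apply: Rlt_le; by apply: Rinv_0_lt_compat.
lra.
Qed.

Lemma Hlow b K : 0 < b < 1 -> (Rpower (INR K + 1) (1 - b) - 1) / (1 - b) <= ssum (w b) K.
Proof.
move=> hb.
have hg : 0 < 1 - b by lra.
elim: K => [|K IH].
  rewrite /= Rplus_0_l /Rpower ln_1 Rmult_0_r exp_0. have -> : (1 - 1) / (1 - b) = 0 by field; lra. lra.
change (ssum (w b) K.+1) with (ssum (w b) K + w b K.+1).
set x := INR K.+1.
have hx : 0 < x by apply: lt_0_INR; lia.
have ex : INR K + 1 = x by rewrite /x S_INR.
rewrite ex in IH.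
have hb' := bern ((x + 1) * / x) (1 - b) ltac:(apply: Rmult_lt_0_compat; [lra| by apply: Rinv_0_lt_compat]) ltac:(lra).
rewrite Rpower_div // in hb'; last lra.
have e1 : w b K.+1 = Rpower x (1 - b) * / x.
  rewrite /w -/x -Rpower_m1 //; congr Rpower; ring.
rewrite e1.
have hpx := Rpower_pos x (1 - b).
have hpy := Rpower_pos (x + 1) (1 - b).
have : Rpower (x + 1) (1 - b) <= Rpower x (1 - b) * (1 + (1 - b) * ((x + 1) * / x - 1)).
  have := Rmult_le_compat_l (Rpower x (1 - b)) _ _ (Rlt_le _ _ hpx) hb'.
  by rewrite -Rmult_assoc (Rmult_comm _ (Rpower (x + 1) _)) Rmult_assoc Rinv_r ?Rmult_1_r; lra.
have -> : (x + 1) * / x - 1 = / x by field; lra.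
move=> h.
have -> : (Rpower (x + 1) (1 - b) - 1) / (1 - b) = (Rpower (x + 1) (1 - b) - Rpower x (1 - b)) / (1 - b) + (Rpower x (1 - b) - 1) / (1 - b) by field; lra.
have : (Rpower (x + 1) (1 - b) - Rpower x (1 - b)) / (1 - b) <= Rpower x (1 - b) * / x.
  apply: div_le_l => //. nra.
lra.
Qed.

Lemma ssum_ext f g K : (forall k, (0 < k)%N -> (k <= K)%N -> f k = g k) -> ssum f K = ssum g K.
Proof.
elim: K => [//|K IH] h /=. rewrite IH ?h //. move=> k k0 kK; apply: h => //; exact: leqW.
Qed.

Lemma ssum_le f g K : (forall k, (0 < k)%N -> (k <= K)%N -> f k <= g k) -> ssum f K <= ssum g K.
Proof.
elim: K => [|K IH] h /=; first lra.
have := h K.+1 erefl (leqnn _). have := IH (fun k k0 kK => h k k0 (leqW kK)). lra.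
Qed.

Lemma ssum_ge0 f K : (forall k, (0 < k)%N -> 0 <= f k) -> 0 <= ssum f K.
Proof. elim: K => [|K IH] h /=; first lra. have := h K.+1 erefl. have := IH h. lra. Qed.

Lemma ssum_mono f a K : (forall k, (0 < k)%N -> 0 <= f k) -> (a <= K)%N -> ssum f a <= ssum f K.
Proof.
move=> h. elim: K => [|K IH] haK.
  by rewrite leqn0 in haK; move/eqP: haK => ->; lra.
rewrite leq_eqVlt in haK. case/orP: haK => [/eqP -> | haK]; first lra.
have := IH haK. have := h K.+1 erefl. rewrite /=; lra.
Qed.

Lemma tele_le f F a K : (a <= K)%N ->
  (forall k, (a < k)%N -> (k <= K)%N -> f k <= F k - F k.-1) ->
  ssum f K - ssum f a <= F K - F a.
Proof.
elim: K => [|K IH] haK h.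
  by rewrite leqn0 in haK; move/eqP: haK => ->; lra.
rewrite leq_eqVlt in haK. case/orP: haK => [/eqP -> | haK]; first lra.
have := IH haK (fun k k0 kK => h k k0 (leqW kK)). have := h K.+1 haK (leqnn _). rewrite /=; lra.
Qed.

Lemma tele_ge f F a K : (a <= K)%N ->
  (forall k, (a < k)%N -> (k <= K)%N -> F k - F k.-1 <= f k) ->
  F K - F a <= ssum f K - ssum f a.
Proof.
elim: K => [|K IH] haK h.
  by rewrite leqn0 in haK; move/eqP: haK => ->; lra.
rewrite leq_eqVlt in haK. case/orP: haK => [/eqP -> | haK]; first lra.
have := IH haK (fun k k0 kK => h k k0 (leqW kK)). have := h K.+1 haK (leqnn _). rewrite /=; lra.
Qed.

Lemma harm_up K : (0 < K)%N -> ssum (fun k => / INR k) K <= 1 + ln (INR K).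
Proof.
move=> K0.
have := @tele_le (fun k => / INR k) (fun k => ln (INR k)) 1 K K0.
have -> : ssum (fun k => / INR k) 1 = 1 by rewrite /= Rinv_1; lra.
rewrite ln_1. move=> h; have : ssum (fun k => / INR k) K - 1 <= ln (INR K) - 0; last lra.
apply: h => k k1 kK.
case: k k1 {kK} => [//|k] k1. rewrite /= -/(INR k.+1).
have hk : 0 < INR k by apply: lt_0_INR; apply/ltP.
rewrite S_INR.
have := ln_le_sub1 (INR k * / (INR k + 1)) ltac:(apply: Rmult_lt_0_compat => //; apply: Rinv_0_lt_compat; lra).
rewrite ln_mult ?ln_Rinv //; try lra; last by apply: Rinv_0_lt_compat; lra.
have -> : INR k * / (INR k + 1) - 1 = - / (INR k + 1) by field; lra.
lra.
Qed.

Lemma harm_low K : ln (INR K + 1) <= ssum (fun k => / INR k) K.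
Proof.
have := @tele_ge (fun k => / INR k) (fun k => ln (INR k + 1)) 0 K (leq0n K).
rewrite /= Rplus_0_l ln_1. move=> h; have : ln (INR K + 1) - 0 <= ssum (fun k => / INR k) K - 0; last lra.
apply: h => k k1 kK.
case: k k1 {kK} => [//|k] k1. rewrite /= -/(INR k.+1) -S_INR.
have hk : 0 < INR k.+1 by apply: lt_0_INR; apply/ltP.
rewrite (S_INR k.+1).
have := ln_le_sub1 ((INR k.+1 + 1) * / INR k.+1) ltac:(apply: Rmult_lt_0_compat; [lra| by apply: Rinv_0_lt_compat]).
rewrite ln_mult ?ln_Rinv //; try lra; last by apply: Rinv_0_lt_compat; lra.
have -> : (INR k.+1 + 1) * / INR k.+1 - 1 = / INR k.+1 by field; lra.
rewrite -(S_INR k); lra.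
Qed.

Lemma lim_ge (u : nat -> R) l c N : Un_cv u l -> (forall m, (N <= m)%N -> c <= u m) -> c <= l.
Proof.
move=> hu hc. apply: Rnot_lt_le => hlt.
have [M hM] := hu (c - l) ltac:(lra).
have := hM (maxn N M) ltac:(apply/leP; exact: leq_maxr).
have := hc (maxn N M) (leq_maxl _ _).
rewrite /R_dist. move=> h1 h2. have := Rle_abs (u (maxn N M) - l). lra.
Qed.

Lemma lim_le (u : nat -> R) l c N : Un_cv u l -> (forall m, (N <= m)%N -> u m <= c) -> l <= c.
Proof.
move=> hu hc. apply: Rnot_lt_le => hlt.
have [M hM] := hu (l - c) ltac:(lra).
have := hM (maxn N M) ltac:(apply/leP; exact: leq_maxr).
have := hc (maxn N M) (leq_maxl _ _).
rewrite /R_dist. move=> h1 h2. have := Rle_abs (l - u (maxn N M)). rewrite Rabs_minus_sym. lra.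
Qed.

Lemma sumf_ssum a N : sum_f_R0 a N = ssum (fun k => a k.-1) N.+1.
Proof. elim: N => [|N IH] /=; first lra. rewrite IH /=. lra. Qed.

Lemma floor_ex x : 0 <= x -> exists K : nat, INR K <= x < INR K + 1.
Proof.
move=> hx. have [h1 h2] := archimed x.
exists (Z.to_nat (up x - 1)).
have hz : (0 <= up x - 1)%Z.
  have : (0 < up x)%Z by apply: lt_IZR; lra.
  lia.
rewrite INR_IZR_INZ Z2Nat.id // minus_IZR. lra.
Qed.

Lemma eventually_ln T : exists N : nat, forall n, (N <= n)%N -> T < ln (INR n).
Proof.
have [K [hK1 hK2]] := floor_ex (exp T) (Rlt_le _ _ (exp_pos T)).
exists K.+1 => n hn.
have hn' : INR K + 1 <= INR n by rewrite -S_INR; apply: le_INR; apply/leP.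
rewrite -(ln_exp T). apply: ln_increasing; [apply: exp_pos | lra].
Qed.


Lemma coll_eq (n k : nat) : (0 < k)%N ->
  coll_prob n k = 1 - INR (k ^_ n) / INR (k ^ n).
Proof.
move=> k0; rewrite /coll_prob.
have hc : #|[set f : {ffun 'I_n -> 'I_k} | ~~ injectiveb f]| =
   (#|{ffun 'I_n -> 'I_k}| - #|[set f : {ffun 'I_n -> 'I_k} | injectiveb f]|)%N.
  have := cardsC [set f : {ffun 'I_n -> 'I_k} | injectiveb f].
  move=> <-.
  rewrite addKn; apply: eq_card => f; by rewrite !inE.
rewrite hc card_inj_ffuns card_ffun !card_ord.
have hle : (k ^_ n <= k ^ n)%N.
  elim: n {hc} => [//|n IH].
  by rewrite ffactnSr expnSr leq_mul // leq_subr.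
rewrite minus_INR; last by apply/leP.
have hp : 0 < INR (k ^ n).
  apply: lt_0_INR; apply/ltP; by rewrite expn_gt0 k0.
field; lra.
Qed.


Definition Q (n k : nat) : R := INR (k ^_ n) / INR (k ^ n).
Definition sn (n : nat) : R := INR n * (INR n - 1) / 2.

Lemma sn_S n : sn n.+1 = sn n + INR n.
Proof. rewrite /sn S_INR; field. Qed.

Lemma sn_ge0 n : 0 <= sn n.
Proof. rewrite /sn. destruct n as [|n]; first (simpl; lra).
rewrite S_INR. have := pos_INR n. nra. Qed.

Lemma INR_pos k : (0 < k)%N -> 0 < INR k.
Proof. move=> h; apply: lt_0_INR; by apply/ltP. Qed.
Arguments INR_pos {k}.

Lemma Q_S n k : (0 < k)%N -> Q n.+1 k = Q n k * (INR (k - n) / INR k).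
Proof.
move=> k0; rewrite /Q ffactnSr expnSr !mult_INR.
have h1 := INR_pos k0.
have h2 : 0 < INR (k ^ n) by apply: INR_pos; rewrite expn_gt0 k0.
field; lra.
Qed.

Lemma Q_ge0 n k : 0 <= Q n k.
Proof.
rewrite /Q; case: (k ^ n)%N => [|p].
  rewrite /= Rdiv_def Rinv_0; lra.
apply: div_ge0; [apply: pos_INR| apply: lt_0_INR; lia].
Qed.

Lemma r_ge0 n k : 0 <= INR (k - n) / INR k.
Proof.
case: k => [|k]; first by rewrite /= Rdiv_def Rinv_0; lra.
apply: div_ge0; [apply: pos_INR| apply: lt_0_INR; lia].
Qed.

Lemma r_eq n k : (n <= k)%N -> (0 < k)%N -> INR (k - n) / INR k = 1 - INR n / INR k.
Proof.
move=> h k0; rewrite minus_INR; last by apply/leP.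
have := INR_pos k0; move=> ?; field; lra.
Qed.

Lemma r_zero n k : (k <= n)%N -> INR (k - n) = 0.
Proof. move=> h; have -> : (k - n = 0)%N by apply/eqP; rewrite subn_eq0. done. Qed.

Lemma QA n k : (0 < k)%N -> Q n k <= exp (- (sn n / INR k)).
Proof.
move=> k0; have hk := INR_pos k0.
elim: n => [|n IH].
  rewrite /Q /sn /= Rdiv_1_r. replace (- (0 * (0 - 1) / 2 / INR k)) with 0 by (field; lra).
  rewrite exp_0; lra.
rewrite Q_S // sn_S.
have hr : INR (k - n) / INR k <= exp (- (INR n / INR k)).
  case: (leqP n k) => h.
    rewrite r_eq //. have := exp_ineq1_le (- (INR n / INR k)); lra.
  rewrite r_zero; last by apply: ltnW.
  rewrite Rdiv_0_l; apply: Rlt_le; apply: exp_pos.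
have -> : - ((sn n + INR n) / INR k) = - (sn n / INR k) + - (INR n / INR k) by field; lra.
rewrite exp_plus.
apply: Rmult_le_compat => //; [apply: Q_ge0 | apply: r_ge0].
Qed.

Lemma QU n k : (0 < k)%N -> 1 - sn n / INR k <= Q n k.
Proof.
move=> k0; have hk := INR_pos k0.
elim: n => [|n IH].
  rewrite /Q /sn /= Rdiv_1_r. lra.
rewrite Q_S // sn_S.
case: (ltnP n k) => h.
  rewrite (@r_eq n k (ltnW h) k0).
  have hx : INR n / INR k <= 1.
    apply: div_le_l => //. rewrite Rmult_1_l; apply: le_INR; apply/leP; exact: ltnW.
  have hx0 : 0 <= INR n / INR k by apply: div_ge0 => //; apply: pos_INR.
  have ha : 0 <= sn n / INR k by apply: div_ge0 => //; apply: sn_ge0.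
  have -> : 1 - (sn n + INR n) / INR k = 1 - sn n / INR k - INR n / INR k by field; lra.
  nra.
have : INR k <= INR n by apply: le_INR; apply/leP.
move=> hkn.
have : 0 <= Q n k * (INR (k - n) / INR k) by apply: Rmult_le_pos; [apply: Q_ge0|apply: r_ge0].
have : 1 <= (sn n + INR n) / INR k.
  apply: div_le_r => //. have := sn_ge0 n; lra.
lra.
Qed.

Lemma exp_low x : 0 <= x <= 1 -> exp (- x) * (1 - x * x) <= 1 - x.
Proof.
move=> hx. have h1 := exp_ineq1_le x.
have h2 : exp x * exp (- x) = 1 by rewrite -exp_plus Rplus_opp_r exp_0.
have h3 := exp_pos (- x).
nra.
Qed.

Lemma QB n k : (0 < k)%N -> (n <= k)%N ->
  exp (- (sn n / INR k)) * (1 - INR n ^ 3 / INR k ^ 2) <= Q n k.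
Proof.
move=> k0; have hk := INR_pos k0.
elim: n => [|n IH] h.
  rewrite /Q /sn /= Rdiv_1_r. replace (- (0 * (0 - 1) / 2 / INR k)) with 0 by (field; lra).
  rewrite exp_0; have : 0 * (0 * (0*1)) / (INR k * (INR k * 1)) = 0 by field; lra.
  lra.
have hnk : (n < k)%N by exact: h.
rewrite Q_S // sn_S (@r_eq n k (ltnW hnk) k0).
have IH' := IH (ltnW hnk).
set x := INR n / INR k.
have hx : 0 <= x <= 1.
  split; first by apply: div_ge0 => //; apply: pos_INR.
  apply: div_le_l => //. rewrite Rmult_1_l; apply: le_INR; apply/leP; exact: ltnW.
set E := exp (- (sn n / INR k)).
have hE : 0 < E by apply: exp_pos.
have -> : exp (- ((sn n + INR n) / INR k)) = E * exp (- x).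
  rewrite /E /x -exp_plus; congr exp; field; lra.
have hex := exp_pos (- x).
have hlow := @exp_low x hx.
set A := 1 - INR n ^ 3 / INR k ^ 2.
have hA : 1 - INR n.+1 ^ 3 / INR k ^ 2 <= A - x * x.
  rewrite /A /x S_INR. have := pos_INR n => hn.
  have : INR n ^ 3 + INR n ^ 2 <= (INR n + 1) ^ 3 by nra.
  move=> hh.
  have -> : INR n / INR k * (INR n / INR k) = INR n ^ 2 / INR k ^ 2 by field; lra.
  have hk2 : 0 < INR k ^ 2 by nra.
  have : (INR n ^ 3 + INR n ^ 2) / INR k ^ 2 <= (INR n + 1) ^ 3 / INR k ^ 2.
    rewrite !Rdiv_def; apply: Rmult_le_compat_r => //; apply: Rlt_le; by apply: Rinv_0_lt_compat.
  have -> : (INR n ^ 3 + INR n ^ 2) / INR k ^ 2 = INR n ^ 3 / INR k ^ 2 + INR n ^ 2 / INR k ^ 2 by field; lra.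
  lra.
have hQ := Q_ge0 n k.
case: (Rle_lt_dec 0 A) => hA0.
  (* Q*(1-x) >= E*A*(1-x) >= E*A*exp(-x)*(1-x^2) >= E*exp(-x)*(A - x^2) *)
  have s1 : E * A * (exp (- x) * (1 - x * x)) <= Q n k * (1 - x).
    have : 0 <= 1 - x * x by nra.
    move=> h1x.
    apply: Rmult_le_compat; try nra.
    exact: IH'.
  have s2 : E * exp (- x) * (A - x * x) <= E * A * (exp (- x) * (1 - x * x)).
    have hA1 : A <= 1.
      rewrite /A. have : 0 <= INR n ^ 3 / INR k ^ 2; last lra.
      apply: div_ge0; [have := pos_INR n; nra | nra].
    have hEx : 0 < E * exp (- x) by nra.
    have : 0 <= (E * exp (- x)) * ((x * x) * (1 - A)) by apply: Rmult_le_pos; nra.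
    nra.
  have hEx : 0 < E * exp (- x) by nra.
  have : E * exp (- x) * (1 - INR n.+1 ^ 3 / INR k ^ 2) <= E * exp (- x) * (A - x * x).
    apply: Rmult_le_compat_l => //; lra.
  lra.
have hEx : 0 < E * exp (- x) by nra.
have : 0 <= Q n k * (1 - x) by nra.
nra.
Qed.


Lemma coll_Q n k : (0 < k)%N -> coll_prob n k = 1 - Q n k.
Proof. move=> k0; rewrite coll_eq //. Qed.

Lemma Q_le1 n k : (0 < k)%N -> Q n k <= 1.
Proof.
move=> k0; have := QA n k k0. have : exp (- (sn n / INR k)) <= 1.
  rewrite -exp_0; apply: exp_le. have := @div_ge0 _ _ (sn_ge0 n) (INR_pos k0). lra.
lra.
Qed.

Lemma coll_ge0 n k : (0 < k)%N -> 0 <= coll_prob n k.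
Proof. move=> k0; rewrite coll_Q //; have := Q_le1 n k k0; lra. Qed.

Lemma w_pos b k : 0 < w b k.
Proof. exact: Rpower_pos. Qed.

Definition term b n k := w b k * coll_prob n k.

Lemma term_ge0 b n k : (0 < k)%N -> 0 <= term b n k.
Proof. move=> k0; apply: Rmult_le_pos; [apply: Rlt_le; apply: w_pos| exact: coll_ge0]. Qed.

Lemma lam_le b n lam U : infinite_sum (fun i => Rpower (INR i.+1) (- b) * coll_prob n i.+1) lam ->
  (forall K, ssum (term b n) K <= U) -> lam <= U.
Proof.
move=> hs hU. apply: (@lim_le _ _ _ 0%N hs) => m _.
rewrite sumf_ssum. rewrite (@ssum_ext _ (term b n)); first exact: hU.
by move=> [|k].
Qed.

Lemma lam_ge b n lam K : infinite_sum (fun i => Rpower (INR i.+1) (- b) * coll_prob n i.+1) lam ->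
  ssum (term b n) K <= lam.
Proof.
move=> hs. apply: (@lim_ge _ _ _ K hs) => m hm.
rewrite sumf_ssum. rewrite (@ssum_ext _ (term b n)); last by move=> [|k].
apply: ssum_mono; last exact: leqW.
move=> k k0; exact: term_ge0.
Qed.

Lemma ln_le x y : 0 < x -> x <= y -> ln x <= ln y.
Proof. move=> hx h; case: (Rle_lt_or_eq_dec _ _ h) => h'.
  apply: Rlt_le; exact: ln_increasing. by rewrite h'; lra. Qed.

Lemma w1 k : (0 < k)%N -> w 1 k = / INR k.
Proof. move=> k0; rewrite /w Rpower_Ropp Rpower_1 //; exact: INR_pos. Qed.

Lemma INR_ge1 k : (0 < k)%N -> 1 <= INR k.
Proof. move=> k0; rewrite -INR_1; apply: le_INR; by apply/leP. Qed.

Lemma sn_ge n : (2 <= n)%N -> INR n * INR n / 4 <= sn n /\ sn n <= INR n * INR n / 2.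
Proof.
move=> hn. have : 2 <= INR n by rewrite -(INR_IZR_INZ 2); apply: le_INR; apply/leP.
rewrite /sn; split; nra.
Qed.

Lemma coll_le_sn n k : (0 < k)%N -> coll_prob n k <= sn n / INR k.
Proof. move=> k0; rewrite coll_Q //; have := QU n k k0; lra. Qed.

Lemma coll_le1 n k : (0 < k)%N -> coll_prob n k <= 1.
Proof. move=> k0; rewrite coll_Q //; have := Q_ge0 n k; lra. Qed.

Lemma coll_ge_exp n k : (0 < k)%N -> 1 - exp (- (sn n / INR k)) <= coll_prob n k.
Proof. move=> k0; rewrite coll_Q //; have := QA n k k0; lra. Qed.

Lemma part2_up n K : (2 <= n)%N -> ssum (term 1 n) K <= 3 / 2 + 2 * ln (INR n).
Proof.
move=> hn.
have hn0 : (0 < n)%N by apply: leq_trans hn.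
have hnR : 2 <= INR n by rewrite -(INR_IZR_INZ 2); apply: le_INR; apply/leP.
have [hs1 hs2] := sn_ge n hn.
have hL : forall K, (K <= n * n)%N -> ssum (term 1 n) K <= 1 + 2 * ln (INR n).
  move=> K' hK'.
  have h1 : ssum (term 1 n) K' <= ssum (fun k => / INR k) K'.
    apply: ssum_le => k k0 _. rewrite /term w1 //.
    have := coll_le1 n k k0. have := coll_ge0 n k k0. have := INR_pos k0 => hk.
    have hi : 0 < / INR k by apply: Rinv_0_lt_compat.
    nra.
  case: K' hK' h1 => [|K'] hK' h1.
    rewrite /=. have : 0 < ln (INR n) by rewrite -ln_1; apply: ln_increasing; lra. lra.
  have := harm_up K'.+1 erefl.
  have : ln (INR K'.+1) <= 2 * ln (INR n).
    have -> : 2 * ln (INR n) = ln (INR n * INR n) by rewrite ln_mult; lra.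
    apply: ln_le; first by apply: lt_0_INR; lia.
    rewrite -mult_INR; apply: le_INR; by apply/leP.
  lra.
case: (leqP K (n * n)) => hK.
  have := hL K hK; lra.
have hnn : INR (n * n) = INR n * INR n by rewrite mult_INR.
have := @tele_le (term 1 n) (fun k => - (sn n / INR k)) (n * n) K (ltnW hK).
have := hL (n * n)%N (leqnn _).
move=> h1 h2.
have h3 : ssum (term 1 n) K - ssum (term 1 n) (n * n) <=
      - (sn n / INR K) - - (sn n / INR (n * n)).
  apply: h2 => k hk1 hkK.
  have k0 : (0 < k)%N by apply: leq_ltn_trans hk1.
  have k1 : (1 < k)%N.
    apply: leq_ltn_trans hk1. rewrite -[1%N]/(1 * 1)%N. apply: leq_mul; exact: hn0.
  rewrite /term w1 //.
  have hk := INR_pos k0.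
  have ek : INR k.-1 = INR k - 1 by rewrite -(prednK k0) S_INR /=; lra.
  have hk2 : 2 <= INR k by rewrite -(INR_IZR_INZ 2); apply: le_INR; apply/leP.
  rewrite ek.
  have := coll_le_sn n k k0.
  have hsn := sn_ge0 n.
  have hi : 0 < / INR k by apply: Rinv_0_lt_compat.
  move=> hc.
  have : / INR k * coll_prob n k <= / INR k * (sn n / INR k) by apply: Rmult_le_compat_l; lra.
  have : / INR k * (sn n / INR k) <= - (sn n / INR k) - - (sn n / (INR k - 1)).
    have -> : - (sn n / INR k) - - (sn n / (INR k - 1)) = sn n / (INR k * (INR k - 1)) by field; lra.
    rewrite !Rdiv_def. rewrite (Rmult_comm (/ INR k)) Rmult_assoc. apply: Rmult_le_compat_l => //.
    rewrite Rinv_mult. apply: Rmult_le_compat_l; first lra.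
    apply: Rinv_le_contravar; lra.
  lra.
have : sn n / INR (n * n) <= 1 / 2.
  rewrite hnn. apply: div_le_l; nra.
have : 0 <= sn n / INR K by apply: div_ge0; [exact: sn_ge0| apply: INR_pos; apply: leq_ltn_trans hK].
lra.
Qed.

Lemma part2_low n c : (2 <= n)%N -> 1 <= c ->
  exists K, (1 - exp (- c)) * ln (sn n / c) <= ssum (term 1 n) K.
Proof.
move=> hn hc.
have [hs1 hs2] := sn_ge n hn.
have hnR : 2 <= INR n by rewrite -(INR_IZR_INZ 2); apply: le_INR; apply/leP.
have hm : 0 < sn n / c by apply: Rdiv_lt_0_compat; nra.
have [K [hK1 hK2]] := floor_ex (sn n / c) (Rlt_le _ _ hm).
exists K.
have he : 0 <= 1 - exp (- c).
  have : exp (- c) <= 1 by rewrite -exp_0; apply: exp_le; lra. lra.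
have h1 : (1 - exp (- c)) * ssum (fun k => / INR k) K <= ssum (term 1 n) K.
  have -> : (1 - exp (- c)) * ssum (fun k => / INR k) K = ssum (fun k => (1 - exp (- c)) * / INR k) K.
    elim: (K) => [|K' IH] /=; first ring. rewrite -IH; ring.
  apply: ssum_le => k k0 kK.
  rewrite /term w1 //.
  have hk := INR_pos k0.
  have hi : 0 < / INR k by apply: Rinv_0_lt_compat.
  have := coll_ge_exp n k k0.
  have : exp (- (sn n / INR k)) <= exp (- c).
    apply: exp_le.
    have : INR k <= INR K by apply: le_INR; apply/leP.
    move=> hkK.
    have : c * INR k <= sn n.
      have : INR k <= sn n / c by lra.
      move=> h. have : c * INR k <= c * (sn n / c) by apply: Rmult_le_compat_l; lra.
      have -> : c * (sn n / c) = sn n by field; lra. done.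
    move=> h. have : c <= sn n / INR k by apply: div_le_r; lra. lra.
  move=> h2 h3.
  have : / INR k * (1 - exp (- c)) <= / INR k * coll_prob n k by apply: Rmult_le_compat_l; lra.
  lra.
have := harm_low K.
have : ln (sn n / c) <= ln (INR K + 1) by apply: ln_le; lra.
move=> h2 h3.
have : (1 - exp (- c)) * ln (sn n / c) <= (1 - exp (- c)) * ssum (fun k => / INR k) K.
  apply: Rmult_le_compat_l => //; lra.
lra.
Qed.

Theorem part2 : forall lam : nat -> R, is_total_rate 1 lam ->
       Un_cv (fun n => lam n / ln (INR n)) 2.
Proof.
move=> lam hlam eps heps.
set c := Rmax 1 (ln (4 / eps)).
have hc1 : 1 <= c by apply: Rmax_l.
have hce : exp (- c) <= eps / 4.
  have : ln (4 / eps) <= c by apply: Rmax_r.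
  move=> h. rewrite -(exp_ln (eps / 4)); last lra.
  apply: exp_le. have -> : ln (eps / 4) = - ln (4 / eps).
    rewrite -ln_Rinv; last by apply: Rdiv_lt_0_compat; lra.
    congr ln; field; lra.
  lra.
have hc4 : 0 < ln (4 * c) by rewrite -ln_1; apply: ln_increasing; lra.
have [N1 hN1] := eventually_ln (Rmax (4 / eps) (2 * ln (4 * c) / eps)).
exists (maxn N1 2) => n hn.
have hn' : (maxn N1 2 <= n)%N by apply/leP.
have hn2 : (2 <= n)%N by apply: leq_trans hn'; exact: leq_maxr.
have hL := hN1 n (leq_trans (leq_maxl _ _) hn').
set L := ln (INR n) in hL *.
have hL1 : 4 / eps < L by have := Rmax_l (4 / eps) (2 * ln (4 * c) / eps); lra.
have hL2 : 2 * ln (4 * c) / eps < L by have := Rmax_r (4 / eps) (2 * ln (4 * c) / eps); lra.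
have h4e : 0 < 4 / eps by apply: Rdiv_lt_0_compat; lra.
have hL0 : 0 < L by lra.
have hnR : 2 <= INR n by rewrite -(INR_IZR_INZ 2); apply: le_INR; apply/leP.
have hup : lam n <= 3 / 2 + 2 * L by apply: (lam_le _ _ _ _ (hlam n)) => K; exact: part2_up.
have [K hK] := part2_low n c hn2 hc1.
have hlo := lam_ge 1 n (lam n) K (hlam n).
have [hs1 hs2] := sn_ge n hn2.
have hln : 2 * L - ln (4 * c) <= ln (sn n / c).
  have -> : 2 * L - ln (4 * c) = ln (INR n * INR n / (4 * c)).
    rewrite /Rdiv (ln_mult (INR n * INR n) (/ (4 * c))); [|nra| apply: Rinv_0_lt_compat; lra].
    rewrite ln_Rinv; last lra. rewrite (ln_mult (INR n) (INR n)); try lra.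
    rewrite (ln_mult 4 c); try lra. rewrite /L; ring.
  apply: ln_le; first by apply: Rdiv_lt_0_compat; nra.
  have -> : INR n * INR n / (4 * c) = (INR n * INR n / 4) / c by field; lra.
  rewrite !Rdiv_def; apply: Rmult_le_compat_r; [apply: Rlt_le; apply: Rinv_0_lt_compat; lra| rewrite -Rdiv_def; lra].
have he0 : 0 <= 1 - exp (- c).
  have : exp (- c) <= 1 by rewrite -exp_0; apply: exp_le; lra. lra.
have hlo' : (1 - exp (- c)) * (2 * L - ln (4 * c)) <= lam n.
  have : (1 - exp (- c)) * (2 * L - ln (4 * c)) <= (1 - exp (- c)) * ln (sn n / c).
    apply: Rmult_le_compat_l => //.
  lra.
rewrite /R_dist. apply: Rabs_def1.
-
  have : lam n / L <= 3 / 2 / L + 2.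
    apply: div_le_l => //. have -> : (3 / 2 / L + 2) * L = 3 / 2 + 2 * L by field; lra. done.
  have : 3 / 2 / L < eps.
    apply: (Rle_lt_trans _ (3 / 2 / (4 / eps))).
      rewrite !Rdiv_def. apply: Rmult_le_compat_l; first lra. apply: Rinv_le_contravar; lra.
    have -> : 3 / 2 / (4 / eps) = 3 / 8 * eps by field; lra. lra.
  lra.
- have hep : exp (- c) >= 0 by apply: Rle_ge; apply: Rlt_le; apply: exp_pos.
  have ht : ln (4 * c) / L < eps / 2.
    apply: (Rlt_le_trans _ (ln (4 * c) / (2 * ln (4 * c) / eps))).
      rewrite !Rdiv_def. apply: Rmult_lt_compat_l => //. apply: Rinv_lt_contravar => //.
      apply: Rmult_lt_0_compat => //. apply: Rdiv_lt_0_compat; lra.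
    have -> : ln (4 * c) / (2 * ln (4 * c) / eps) = eps / 2 by field; lra. lra.
  have : (1 - exp (- c)) * (2 * L - ln (4 * c)) / L <= lam n / L.
    rewrite !Rdiv_def; apply: Rmult_le_compat_r => //; apply: Rlt_le; by apply: Rinv_0_lt_compat.
  have -> : (1 - exp (- c)) * (2 * L - ln (4 * c)) / L = (1 - exp (- c)) * (2 - ln (4 * c) / L) by field; lra.
  have ht0 : 0 <= ln (4 * c) / L by apply: div_ge0; lra.
  nra.
Qed.


Definition h (b s : R) : R := Rpower s (b - 1) * exp (- s).

Lemma h_cont b s : 0 < s -> continuous (h b) s.
Proof.
move=> hs. apply: ex_derive_continuous. rewrite /h /Rpower.
auto_derive. lra.
Qed.

Lemma h_RInt b x y : 0 < x -> x <= y -> ex_RInt (h b) x y.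
Proof.
move=> hx hxy. apply: ex_RInt_continuous => z hz.
apply: h_cont. rewrite Rmin_left in hz; last lra. lra.
Qed.

Lemma h_pos b s : 0 < s -> 0 < h b s.
Proof. move=> _; rewrite /h; apply: Rmult_lt_0_compat; [apply: Rpower_pos| apply: exp_pos]. Qed.

Lemma RInt_exp x y : RInt (fun s => exp (- s)) x y = exp (- x) - exp (- y).
Proof.
apply: is_RInt_unique.
have := @is_RInt_derive _ (fun s => - exp (- s)) (fun s => exp (- s)) x y.
rewrite /minus /plus /opp /=. have -> : - exp (- y) + - - exp (- x) = exp (- x) - exp (- y) by ring.
apply.
- move=> z _. auto_derive => //. ring.
- move=> z _. apply: ex_derive_continuous. auto_derive => //.
Qed.

Lemma RInt_cmul (f : R -> R) c x y : ex_RInt f x y -> RInt (fun s => c * f s) x y = c * RInt f x y.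
Proof. move=> hf; exact: (@RInt_scal _ f x y c hf). Qed.

Lemma h_scale b m s : 0 < m -> 0 < s ->
  Rpower m (1 - b) * h b s = Rpower (m / s) (1 - b) * exp (- s).
Proof.
move=> hm hs. rewrite /h /Rpower /Rdiv ln_mult //; last by apply: Rinv_0_lt_compat.
rewrite ln_Rinv // -Rmult_assoc -exp_plus. congr (exp _ * _). ring.
Qed.

Lemma interval_bounds b m k : 0 < b < 1 -> 0 < m -> (0 < k)%N ->
  Rpower (INR k) (1 - b) * (exp (- (m / (INR k + 1))) - exp (- (m / INR k)))
    <= Rpower m (1 - b) * RInt (h b) (m / (INR k + 1)) (m / INR k)
  /\ Rpower m (1 - b) * RInt (h b) (m / (INR k + 1)) (m / INR k)
    <= Rpower (INR k + 1) (1 - b) * (exp (- (m / (INR k + 1))) - exp (- (m / INR k))).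
Proof.
move=> hb hm k0.
have hk := INR_pos k0.
set lo := m / (INR k + 1). set hi := m / INR k.
have hlo : 0 < lo by apply: Rdiv_lt_0_compat; lra.
have hlohi : lo <= hi.
  rewrite /lo /hi !Rdiv_def. apply: Rmult_le_compat_l; first lra.
  apply: Rinv_le_contravar; lra.
have hexp : ex_RInt (fun s => exp (- s)) lo hi.
  apply: ex_RInt_continuous => z _. apply: ex_derive_continuous. auto_derive => //.
have hhb : ex_RInt (h b) lo hi by exact: h_RInt.
rewrite -!RInt_exp -(@RInt_cmul _ (Rpower m (1 - b)) _ _ hhb) -(@RInt_cmul _ (Rpower (INR k) (1 - b)) _ _ hexp) -(@RInt_cmul _ (Rpower (INR k + 1) (1 - b)) _ _ hexp).
have hh : ex_RInt (fun s => Rpower m (1 - b) * h b s) lo hi.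
  apply: ex_RInt_scal. exact: h_RInt.
split; apply: RInt_le => //; try (apply: ex_RInt_scal; exact: hexp).
- move=> s [hs1 hs2]. have hs : 0 < s by lra.
  rewrite h_scale //. apply: Rmult_le_compat_r; first by apply: Rlt_le; apply: exp_pos.
  apply: Rle_Rpower_l; first lra. split => //.
  apply: div_le_r => //. rewrite /hi in hs2.
  have : s * INR k <= m / INR k * INR k by apply: Rmult_le_compat_r; lra.
  have -> : m / INR k * INR k = m by field; lra. lra.
- move=> s [hs1 hs2]. have hs : 0 < s by lra.
  rewrite h_scale //. apply: Rmult_le_compat_r; first by apply: Rlt_le; apply: exp_pos.
  apply: Rle_Rpower_l; first lra. split; first by apply: Rdiv_lt_0_compat.
  apply: div_le_l => //. rewrite /lo in hs1.
  have : m / (INR k + 1) * (INR k + 1) <= s * (INR k + 1) by apply: Rmult_le_compat_r; lra.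
  have -> : m / (INR k + 1) * (INR k + 1) = m by field; lra. lra.
Qed.

Lemma chasles_sum b m K : 0 < m ->
  ssum (fun k => RInt (h b) (m / (INR k + 1)) (m / INR k)) K = RInt (h b) (m / (INR K + 1)) m.
Proof.
move=> hm. elim: K => [|K IH].
  rewrite /= Rplus_0_l Rdiv_1_r. symmetry; exact: RInt_point.
rewrite /= IH -/(INR K.+1).
rewrite Rplus_comm. rewrite (S_INR K).
have h1 : 0 < m / (INR K + 1 + 1) by apply: Rdiv_lt_0_compat; have := pos_INR K; lra.
have h12 : m / (INR K + 1 + 1) <= m / (INR K + 1).
  rewrite !Rdiv_def; apply: Rmult_le_compat_l; first lra. apply: Rinv_le_contravar; have := pos_INR K; lra.
have h23 : m / (INR K + 1) <= m.
  apply: div_le_l; have := pos_INR K; nra.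
apply: RInt_Chasles; apply: h_RInt => //; lra.
Qed.

Lemma tele_exp m K : 0 < m ->
  ssum (fun k => exp (- (m / (INR k + 1))) - exp (- (m / INR k))) K = exp (- (m / (INR K + 1))) - exp (- m).
Proof.
move=> hm. elim: K => [|K IH].
  rewrite /= Rplus_0_l Rdiv_1_r; lra.
rewrite /= IH -/(INR K.+1) (S_INR K). ring.
Qed.

Lemma abel (wf a : nat -> R) K :
  ssum (fun k => wf k * a k) K =
  ssum (fun k => ssum wf k * (a k - a k.+1)) K + ssum wf K * a K.+1.
Proof.
elim: K => [|K IH] /=; first ring.
rewrite IH /=. ring.
Qed.

Lemma ssum_lin (f g : nat -> R) u v K :
  ssum (fun k => u * f k + v * g k) K = u * ssum f K + v * ssum g K.
Proof. elim: K => [|K IH] /=; first ring. rewrite IH; ring. Qed.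

Definition aa (m : R) (k : nat) : R := 1 - exp (- (m / INR k)).
Definition DD (m : R) (k : nat) : R := exp (- (m / (INR k + 1))) - exp (- (m / INR k)).

Lemma aa_diff m k : aa m k - aa m k.+1 = DD m k.
Proof. rewrite /aa /DD (S_INR k); ring. Qed.

Lemma DD_ge0 m k : 0 < m -> (0 < k)%N -> 0 <= DD m k.
Proof.
move=> hm k0; rewrite /DD. have hk := INR_pos k0.
have : exp (- (m / INR k)) <= exp (- (m / (INR k + 1))); last lra.
apply: exp_le. have : m / (INR k + 1) <= m / INR k; last lra.
rewrite !Rdiv_def; apply: Rmult_le_compat_l; first lra. apply: Rinv_le_contravar; lra.
Qed.

Lemma aa_ge0 m k : 0 < m -> 0 <= aa m k.
Proof.
move=> hm. rewrite /aa. have : exp (- (m / INR k)) <= 1; last lra.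
rewrite -exp_0; apply: exp_le. have : 0 <= m / INR k; last lra.
case: k => [|k]; first by rewrite /= Rdiv_def Rinv_0; lra.
apply: div_ge0; [lra| apply: lt_0_INR; lia].
Qed.

Lemma sum_f_up b m K : 0 < b < 1 -> 0 < m ->
  ssum (fun k => w b k * aa m k) K <=
  Rpower m (1 - b) / (1 - b) * RInt (h b) (m / (INR K + 1)) m + ssum (w b) K * aa m K.+1.
Proof.
move=> hb hm. have hg : 0 < 1 - b by lra.
rewrite abel. apply: Rplus_le_compat_r.
rewrite -(chasles_sum b m K hm).
have -> : Rpower m (1 - b) / (1 - b) * ssum (fun k => RInt (h b) (m / (INR k + 1)) (m / INR k)) K
   = ssum (fun k => (Rpower m (1 - b) / (1 - b)) * RInt (h b) (m / (INR k + 1)) (m / INR k) + 0 * 0) K.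
  rewrite ssum_lin; ring.
apply: ssum_le => k k0 _.
rewrite aa_diff.
have [hl _] := interval_bounds b m k hb hm k0.
have hD := DD_ge0 m k hm k0.
have hHk := Hup b k hb.
have : ssum (w b) k * DD m k <= Rpower (INR k) (1 - b) / (1 - b) * DD m k by apply: Rmult_le_compat_r.
have : Rpower (INR k) (1 - b) / (1 - b) * DD m k <= Rpower m (1 - b) / (1 - b) * RInt (h b) (m / (INR k + 1)) (m / INR k).
  rewrite /Rdiv !Rmult_assoc (Rmult_comm (/ (1 - b))) -!Rmult_assoc.
  rewrite (Rmult_assoc (Rpower m _)) (Rmult_comm (/ (1 - b))) -Rmult_assoc.
  apply: Rmult_le_compat_r; first by apply: Rlt_le; apply: Rinv_0_lt_compat.
  rewrite /DD; exact: hl.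
lra.
Qed.

Lemma sum_f_low b m K : 0 < b < 1 -> 0 < m ->
  (Rpower m (1 - b) * RInt (h b) (m / (INR K + 1)) m - 1) / (1 - b) <=
  ssum (fun k => w b k * aa m k) K.
Proof.
move=> hb hm. have hg : 0 < 1 - b by lra.
rewrite abel.
have hHa : 0 <= ssum (w b) K * aa m K.+1.
  apply: Rmult_le_pos; last exact: aa_ge0.
  apply: ssum_ge0 => k _; apply: Rlt_le; apply: Rpower_pos.
have : (Rpower m (1 - b) * RInt (h b) (m / (INR K + 1)) m - 1) / (1 - b) <=
    ssum (fun k => ssum (w b) k * (aa m k - aa m k.+1)) K; last lra.
rewrite -(chasles_sum b m K hm).
have hT := tele_exp m K hm.
have : (Rpower m (1 - b) * ssum (fun k => RInt (h b) (m / (INR k + 1)) (m / INR k)) K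
          - ssum (DD m) K) / (1 - b) <= ssum (fun k => ssum (w b) k * (aa m k - aa m k.+1)) K.
  have -> : (Rpower m (1 - b) * ssum (fun k => RInt (h b) (m / (INR k + 1)) (m / INR k)) K
          - ssum (DD m) K) / (1 - b) =
     ssum (fun k => (Rpower m (1 - b) / (1 - b)) * RInt (h b) (m / (INR k + 1)) (m / INR k) + (- / (1 - b)) * DD m k) K.
    rewrite ssum_lin. field; lra.
  apply: ssum_le => k k0 _.
  rewrite aa_diff.
  have [_ hr] := interval_bounds b m k hb hm k0.
  have hD := DD_ge0 m k hm k0.
  have hHk := Hlow b k hb.
  have : (Rpower (INR k + 1) (1 - b) - 1) / (1 - b) * DD m k <= ssum (w b) k * DD m k by apply: Rmult_le_compat_r.
  have -> : Rpower m (1 - b) / (1 - b) * RInt (h b) (m / (INR k + 1)) (m / INR k) + - / (1 - b) * DD m k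
     = (Rpower m (1 - b) * RInt (h b) (m / (INR k + 1)) (m / INR k) - DD m k) / (1 - b) by field; lra.
  have -> : (Rpower (INR k + 1) (1 - b) - 1) / (1 - b) * DD m k = (Rpower (INR k + 1) (1 - b) * DD m k - DD m k) / (1 - b) by field; lra.
  move=> h1.
  have : (Rpower m (1 - b) * RInt (h b) (m / (INR k + 1)) (m / INR k) - DD m k) / (1 - b) <=
         (Rpower (INR k + 1) (1 - b) * DD m k - DD m k) / (1 - b).
    rewrite !Rdiv_def; apply: Rmult_le_compat_r; first by apply: Rlt_le; apply: Rinv_0_lt_compat.
    rewrite /DD in hr *. lra.
  lra.
move=> h1.
have hDs : ssum (DD m) K <= 1.
  rewrite /DD hT. have : exp (- (m / (INR K + 1))) <= 1; last by have := exp_pos (- m); lra.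
  rewrite -[X in _ <= X]exp_0; apply: exp_le. have : 0 <= m / (INR K + 1); last lra.
  apply: div_ge0; [lra| have := pos_INR K; lra].
have : (Rpower m (1 - b) * ssum (fun k => RInt (h b) (m / (INR k + 1)) (m / INR k)) K - 1) / (1 - b) <=
  (Rpower m (1 - b) * ssum (fun k => RInt (h b) (m / (INR k + 1)) (m / INR k)) K - ssum (DD m) K) / (1 - b).
  rewrite !Rdiv_def; apply: Rmult_le_compat_r; first by apply: Rlt_le; apply: Rinv_0_lt_compat.
  lra.
lra.
Qed.

Lemma RInt_h_ge0 b x y : 0 < x -> x <= y -> 0 <= RInt (h b) x y.
Proof.
move=> hx hxy. apply: RInt_ge_0 => //; first exact: h_RInt.
move=> z hz; apply: Rlt_le; apply: h_pos; lra.
Qed.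

Lemma RInt_h_Riemann b x y (pr : Riemann_integrable (fun t => Rmult (Rpower t (Rminus b 1)) (exp (Ropp t))) x y) :
  RInt (h b) x y = RiemannInt pr.
Proof. rewrite -RInt_Reals. by []. Qed.

Lemma gamma_low b g : is_Gamma b g -> forall eps, 0 < eps ->
  exists d M, 0 < d /\ forall x y, 0 < x -> x < d -> M < y -> x <= y -> g - eps < RInt (h b) x y.
Proof.
move=> hG eps he. have [d [M [hd hM]]] := hG eps he.
exists d, M; split => // x y hx hxd hMy hxy.
have pr : Riemann_integrable (fun t => Rmult (Rpower t (Rminus b 1)) (exp (Ropp t))) x y.
  apply: ex_RInt_Reals_0. exact: h_RInt.
have := hM x y hx hxd hMy pr. rewrite -RInt_h_Riemann.
move=> hh. have := Rle_abs (g - RInt (h b) x y). rewrite Rabs_minus_sym. lra.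
Qed.

Lemma gamma_up b g : is_Gamma b g -> forall x y, 0 < x -> x <= y -> RInt (h b) x y <= g.
Proof.
move=> hG x y hx hxy. apply: Rnot_lt_le => hlt.
have [d [M [hd hM]]] := hG (RInt (h b) x y - g) ltac:(lra).
set x' := Rmin x (d / 2). set y' := Rmax y (M + 1).
have hx'1 : x' <= x by apply: Rmin_l.
have hx'2 : x' <= d / 2 by apply: Rmin_r.
have hx'0 : 0 < x' by rewrite /x'; apply: Rmin_glb_lt; lra.
have hy'1 : y <= y' by apply: Rmax_l.
have hy'2 : M + 1 <= y' by apply: Rmax_r.
have pr : Riemann_integrable (fun t => Rmult (Rpower t (Rminus b 1)) (exp (Ropp t))) x' y'.
  apply: ex_RInt_Reals_0. apply: h_RInt; lra.
have := hM x' y' hx'0 ltac:(lra) ltac:(lra) pr. rewrite -RInt_h_Riemann.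
have e : RInt (h b) x' y' = RInt (h b) x' x + RInt (h b) x y + RInt (h b) y y'.
  rewrite -(RInt_Chasles (h b) x' x y'); try (apply: h_RInt; lra).
  rewrite -(RInt_Chasles (h b) x y y'); try (apply: h_RInt; lra).
  rewrite /plus /=; ring.
have := RInt_h_ge0 b x' x hx'0 hx'1.
have := RInt_h_ge0 b y y' (Rlt_le_trans _ _ _ hx hxy) hy'1.
move=> h1 h2 h3. have := Rle_abs (RInt (h b) x' y' - g). lra.
Qed.


Lemma Rpower_Lm b L : 0 < L -> Rpower L (- b) * L = Rpower L (1 - b).
Proof.
move=> hL. rewrite -{2}(Rpower_1 L hL) -Rpower_plus. congr Rpower; ring.
Qed.

Lemma w_le_L b k L : 0 < b -> 0 < L -> L <= INR k -> w b k <= Rpower L (- b).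
Proof.
move=> hb hL hk. rewrite /w !Rpower_Ropp. apply: Rinv_le_contravar; first exact: Rpower_pos.
apply: Rle_Rpower_l; lra.
Qed.

Lemma coll_up_fine n k : (0 < k)%N -> (n <= k)%N ->
  coll_prob n k <= aa (sn n) k + INR n ^ 3 / INR k ^ 2.
Proof.
move=> k0 hnk. rewrite coll_Q // /aa.
have := QB n k k0 hnk.
have hk := INR_pos k0.
have he : exp (- (sn n / INR k)) <= 1.
  rewrite -[X in _ <= X]exp_0; apply: exp_le. have := @div_ge0 _ _ (sn_ge0 n) hk; lra.
have he0 := exp_pos (- (sn n / INR k)).
have hq : 0 <= INR n ^ 3 / INR k ^ 2 by apply: div_ge0; [have := pos_INR n; nra| nra].
nra.
Qed.

Definition cc b n L k := if (k < L)%N then w b k else INR n ^ 3 * w b k / INR k ^ 2.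

Lemma sn_pos n : (2 <= n)%N -> 0 < sn n.
Proof.
move=> hn. have [h1 _] := sn_ge n hn.
have : 2 <= INR n by rewrite -(INR_IZR_INZ 2); apply: le_INR; apply/leP.
nra.
Qed.

Lemma term_le b n L k : (0 < k)%N -> (2 <= n)%N -> (n <= L)%N ->
  term b n k <= w b k * aa (sn n) k + cc b n L k.
Proof.
move=> k0 hn hnL. rewrite /term /cc. have hw := w_pos b k.
have hm := sn_pos n hn.
have ha := aa_ge0 (sn n) k hm.
case: ifP => hk.
  have := coll_le1 n k k0.
  move=> h1. have : w b k * coll_prob n k <= w b k * 1 by apply: Rmult_le_compat_l; lra.
  have : w b k * 0 <= w b k * aa (sn n) k by apply: Rmult_le_compat_l; lra.
  lra.
have hLk : (L <= k)%N by rewrite leqNgt hk.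
have := coll_up_fine n k k0 (leq_trans hnL hLk).
move=> h1.
have : w b k * coll_prob n k <= w b k * (aa (sn n) k + INR n ^ 3 / INR k ^ 2) by apply: Rmult_le_compat_l; lra.
have -> : w b k * (aa (sn n) k + INR n ^ 3 / INR k ^ 2) = w b k * aa (sn n) k + INR n ^ 3 * w b k / INR k ^ 2.
  have := INR_pos k0. move=> ?; field; lra.
lra.
Qed.

Lemma cc_ge0 b n L k : 0 <= cc b n L k.
Proof.
rewrite /cc; case: ifP => _; first by apply: Rlt_le; apply: w_pos.
case: k => [|k]. rewrite /= Rmult_0_l Rdiv_def Rinv_0; lra.
apply: div_ge0; last by have := INR_pos (k := k.+1) erefl; nra.
apply: Rmult_le_pos; [have := pos_INR n; nra| apply: Rlt_le; apply: w_pos].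
Qed.

Lemma cc_sum b n L K : 0 < b < 1 -> (2 <= L)%N -> INR n ^ 3 <= INR L ^ 2 ->
  ssum (cc b n L) K <= Rpower (INR L) (1 - b) / (1 - b) + 2 * Rpower (INR L) (1 - b).
Proof.
move=> hb hL hn3.
have hL0 : (0 < L)%N by apply: leq_trans hL.
have hg : 0 < 1 - b by lra.
have hLR : 2 <= INR L by rewrite -(INR_IZR_INZ 2); apply: le_INR; apply/leP.
have hpL := Rpower_pos (INR L) (1 - b).
have hLm : ssum (cc b n L) L.-1 <= Rpower (INR L) (1 - b) / (1 - b).
  have -> : ssum (cc b n L) L.-1 = ssum (w b) L.-1.
    apply: ssum_ext => k k0 kL. rewrite /cc ifT //. by rewrite -(prednK hL0) ltnS.
  apply: Rle_trans (Hup b L.-1 hb) _.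
  rewrite !Rdiv_def; apply: Rmult_le_compat_r; first by apply: Rlt_le; apply: Rinv_0_lt_compat.
  have e : INR L.-1 = INR L - 1.
    rewrite -{2}(prednK hL0) S_INR; lra.
  apply: Rle_Rpower_l; lra.
have h2 : 0 <= 2 * Rpower (INR L) (1 - b) by lra.
case: (leqP K L.-1) => hK.
  have := @ssum_mono (cc b n L) K L.-1 (fun k _ => cc_ge0 b n L k) hK. lra.
have := @tele_le (cc b n L) (fun k => - (INR n ^ 3 * Rpower (INR L) (- b) / INR k)) L.-1 K (ltnW hK).
have hLp : (0 < L.-1)%N by rewrite -ltnS (prednK hL0).
have e : INR L.-1 = INR L - 1.
  rewrite -{2}(prednK hL0) S_INR; lra.
have hnp : 0 <= INR n ^ 3 by have := pos_INR n; nra.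
have hpb := Rpower_pos (INR L) (- b).
move=> ht.
have ht' : ssum (cc b n L) K - ssum (cc b n L) L.-1 <=
   - (INR n ^ 3 * Rpower (INR L) (- b) / INR K) - - (INR n ^ 3 * Rpower (INR L) (- b) / INR L.-1).
  apply: ht => k hk1 hkK.
  have hLk : (L <= k)%N by rewrite -(prednK hL0).
  have k0 : (0 < k)%N by apply: leq_trans hLk.
  have hkR : INR L <= INR k by apply: le_INR; apply/leP.
  have ek : INR k.-1 = INR k - 1 by rewrite -{2}(prednK k0) S_INR; lra.
  rewrite /cc ifF; last by rewrite ltnNge hLk.
  rewrite ek.
  have hw := w_le_L b k (INR L) (proj1 hb) (ltac:(lra) : 0 < INR L) hkR.
  have hw0 := w_pos b k.
  have -> : - (INR n ^ 3 * Rpower (INR L) (- b) / INR k) - - (INR n ^ 3 * Rpower (INR L) (- b) / (INR k - 1))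
      = INR n ^ 3 * Rpower (INR L) (- b) / (INR k * (INR k - 1)) by field; lra.
  rewrite !Rdiv_def. apply: Rmult_le_compat; try nra.
  - apply: Rlt_le; apply: Rinv_0_lt_compat; nra.
  - apply: Rinv_le_contravar; nra.
have hKR : 0 < INR K by apply: INR_pos; exact: (leq_ltn_trans (leq0n _) hK).
have : 0 <= INR n ^ 3 * Rpower (INR L) (- b) / INR K by apply: div_ge0 => //; nra.
have : INR n ^ 3 * Rpower (INR L) (- b) / INR L.-1 <= 2 * Rpower (INR L) (1 - b).
  rewrite e. apply: div_le_l; first lra.
  rewrite -(Rpower_Lm b (INR L) (ltac:(lra) : 0 < INR L)).
  have : INR n ^ 3 * Rpower (INR L) (- b) <= INR L ^ 2 * Rpower (INR L) (- b) by apply: Rmult_le_compat_r; lra.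
  have : INR L ^ 2 * Rpower (INR L) (- b) <= (2 * INR L * (INR L - 1)) * Rpower (INR L) (- b).
    apply: Rmult_le_compat_r; nra.
  have -> : 2 * (Rpower (INR L) (- b) * INR L) * (INR L - 1) = (2 * INR L * (INR L - 1)) * Rpower (INR L) (- b) by ring.
  lra.
lra.
Qed.

Lemma nat_above x : exists N : nat, x < INR N.
Proof.
case: (Rle_lt_dec 0 x) => hx.
  have [K [_ hK]] := floor_ex x hx. exists K.+1; rewrite S_INR; lra.
exists 0%N; rewrite /=; lra.
Qed.

Lemma aa_le m k : 0 < m -> (0 < k)%N -> aa m k <= m / INR k.
Proof. move=> hm k0; rewrite /aa. have := exp_ineq1_le (- (m / INR k)). lra. Qed.

Lemma sum_waa_all b g m K : 0 < b < 1 -> 0 < m -> is_Gamma b g ->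
  ssum (fun k => w b k * aa m k) K <= Rpower m (1 - b) * g / (1 - b) + 1.
Proof.
move=> hb hm hG.
have hg : 0 < 1 - b by lra.
have [N hN] := nat_above (Rpower (m / (1 - b)) (/ b) + INR K + 1).
have hpo := Rpower_pos (m / (1 - b)) (/ b).
have hKN : (K <= N)%N.
  have h : INR K < INR N by lra.
  have := INR_lt _ _ h. move/ltP => h'. exact: ltnW h'.
have hN1 : (0 < N)%N.
  have h : INR 0 < INR N by rewrite /=; have := pos_INR K; lra.
  have := INR_lt _ _ h. by move/ltP.
have hNR := INR_pos hN1.
have hmono : ssum (fun k => w b k * aa m k) K <= ssum (fun k => w b k * aa m k) N.
  apply: ssum_mono => // k _. apply: Rmult_le_pos; [apply: Rlt_le; apply: w_pos| exact: (aa_ge0 m k hm)].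
have hup := sum_f_up b m N hb hm.
have hI : RInt (h b) (m / (INR N + 1)) m <= g.
  apply: (gamma_up b g hG). apply: Rdiv_lt_0_compat; lra. apply: div_le_l; nra.
have hpm := Rpower_pos m (1 - b).
have hT : ssum (w b) N * aa m N.+1 <= 1.
  have h1 := Hup b N hb.
  have h2 := aa_le m N.+1 hm erefl.
  have h0 : 0 <= aa m N.+1 by exact: (aa_ge0 m N.+1 hm).
  have hH0 : 0 <= ssum (w b) N by apply: ssum_ge0 => k _; apply: Rlt_le; apply: w_pos.
  have : ssum (w b) N * aa m N.+1 <= Rpower (INR N) (1 - b) / (1 - b) * (m / INR N).
    apply: Rmult_le_compat => //. apply: Rle_trans h2 _.
    rewrite !Rdiv_def; apply: Rmult_le_compat_l; first lra. apply: Rinv_le_contravar => //. rewrite S_INR; lra.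
  have -> : Rpower (INR N) (1 - b) / (1 - b) * (m / INR N) = m / (1 - b) * (Rpower (INR N) (1 - b) * / INR N) by field; lra.
  rewrite -Rpower_m1 //.
  have -> : 1 - b - 1 = - b by ring.
  rewrite Rpower_Ropp.
  have : m / (1 - b) <= Rpower (INR N) b.
    have -> : m / (1 - b) = Rpower (Rpower (m / (1 - b)) (/ b)) b.
      rewrite Rpower_mult Rinv_l; last lra. rewrite Rpower_1 //. apply: Rdiv_lt_0_compat; lra.
    have := pos_INR K. move=> ?. apply: Rle_Rpower_l; [lra| split; lra].
  move=> hh.
  have hpb := Rpower_pos (INR N) b.
  have : m / (1 - b) * / Rpower (INR N) b <= Rpower (INR N) b * / Rpower (INR N) b.
    apply: Rmult_le_compat_r => //; apply: Rlt_le; by apply: Rinv_0_lt_compat.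
  rewrite Rinv_r; lra.
have : Rpower m (1 - b) / (1 - b) * RInt (h b) (m / (INR N + 1)) m <= Rpower m (1 - b) * g / (1 - b).
  have -> : Rpower m (1 - b) * g / (1 - b) = Rpower m (1 - b) / (1 - b) * g by field; lra.
  apply: Rmult_le_compat_l => //. apply: div_ge0; lra.
lra.
Qed.

Definition LL (n : nat) : nat := (n * (Nat.sqrt n).+1)%N.

Lemma sqrt_facts n : INR (Nat.sqrt n) * INR (Nat.sqrt n) <= INR n /\ INR n < (INR (Nat.sqrt n) + 1) ^ 2.
Proof.
have [h1 h2] := Nat.sqrt_spec n (Nat.le_0_l n).
split.
  rewrite -mult_INR; apply: le_INR; exact: h1.
have := lt_INR _ _ h2. rewrite mult_INR S_INR. lra.
Qed.

Lemma LL_facts n : (2 <= n)%N -> (n <= LL n)%N /\ (2 <= LL n)%N /\ INR n ^ 3 <= INR (LL n) ^ 2.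
Proof.
move=> hn. have hnL : (n <= LL n)%N by rewrite /LL leq_pmulr.
split => //; split; first exact: leq_trans hn hnL.
rewrite /LL mult_INR S_INR.
have [_ h2] := sqrt_facts n.
have := pos_INR n. have := pos_INR (Nat.sqrt n). nra.
Qed.

Lemma part1_up_all b g n K : 0 < b < 1 -> is_Gamma b g -> (2 <= n)%N ->
  ssum (term b n) K <= Rpower (sn n) (1 - b) * g / (1 - b) + 1
     + (Rpower (INR (LL n)) (1 - b) / (1 - b) + 2 * Rpower (INR (LL n)) (1 - b)).
Proof.
move=> hb hG hn.
have [h1 [h2 h3]] := LL_facts n hn.
have hm := sn_pos n hn.
have : ssum (term b n) K <= ssum (fun k => 1 * (w b k * aa (sn n) k) + 1 * cc b n (LL n) k) K.
  apply: ssum_le => k k0 _. rewrite !Rmult_1_l. exact: term_le.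
rewrite (ssum_lin (fun k => w b k * aa (sn n) k) (cc b n (LL n))).
have := sum_waa_all b g (sn n) K hb hm hG.
have := cc_sum b n (LL n) K hb h2 h3.
move=> hc hw. rewrite !Rmult_1_l. lra.
Qed.


Lemma part1_low b n lam K : 0 < b < 1 -> (2 <= n)%N ->
  infinite_sum (fun i => Rpower (INR i.+1) (- b) * coll_prob n i.+1) lam ->
  (Rpower (sn n) (1 - b) * RInt (h b) (sn n / (INR K + 1)) (sn n) - 1) / (1 - b) <= lam.
Proof.
move=> hb hn hs.
have hm := sn_pos n hn.
apply: Rle_trans (sum_f_low b (sn n) K hb hm) _.
apply: Rle_trans (lam_ge b n lam K hs).
apply: ssum_le => k k0 _. rewrite /term.
apply: Rmult_le_compat_l; first by apply: Rlt_le; apply: w_pos.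
exact: coll_ge_exp.
Qed.

Lemma Rpower_small c eps : 0 < c -> 0 < eps ->
  exists eta, 0 < eta /\ forall y, 0 < y -> y < eta -> Rpower y c < eps.
Proof.
move=> hc he. exists (Rpower eps (/ c)); split; first exact: Rpower_pos.
move=> y hy hlt.
have -> : eps = Rpower (Rpower eps (/ c)) c.
  rewrite Rpower_mult Rinv_l; last lra. by rewrite Rpower_1.
apply: Rlt_Rpower_l => //; lra.
Qed.

Lemma Rpower_combine b n x : 0 < n -> 0 < x ->
  Rpower n (2 * (b - 1)) * Rpower x (1 - b) = Rpower (x / (n * n)) (1 - b).
Proof.
move=> hn hx. rewrite /Rpower -exp_plus /Rdiv ln_mult //; last by apply: Rinv_0_lt_compat; nra.
rewrite ln_Rinv; last nra. rewrite ln_mult //. congr exp; ring.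
Qed.

Lemma Rpower_combine1 b n : 0 < n ->
  Rpower n (2 * (b - 1)) = Rpower (/ (n * n)) (1 - b).
Proof.
move=> hn. have := Rpower_combine b n 1 hn Rlt_0_1.
rewrite /Rpower ln_1 Rmult_0_r exp_0 Rmult_1_r Rdiv_def Rmult_1_l. done.
Qed.

Lemma le_Rpower_small x c : 0 < x <= 1 -> 0 <= c <= 1 -> x <= Rpower x c.
Proof.
move=> hx hc. rewrite /Rpower -{1}(exp_ln x); last lra. apply: exp_le.
have : ln x <= 0 by rewrite -ln_1; apply: ln_le; lra.
nra.
Qed.

Lemma Rpower_le1 x c : 0 < x <= 1 -> 0 <= c -> Rpower x c <= 1.
Proof.
move=> hx hc. rewrite /Rpower -exp_0; apply: exp_le.
have : ln x <= 0 by rewrite -ln_1; apply: ln_le; lra.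
nra.
Qed.

Lemma eventually_gt C : exists N : nat, forall n, (N <= n)%N -> C < INR n.
Proof.
have [N hN] := nat_above C. exists N => n hn.
have : INR N <= INR n by apply: le_INR; apply/leP. lra.
Qed.

Lemma g_pos b g : 0 < b < 1 -> is_Gamma b g -> 0 < g.
Proof.
move=> hb hG.
have := gamma_up b g hG 1 2 Rlt_0_1 ltac:(lra).
have : 0 < RInt (h b) 1 2.
  apply: RInt_gt_0; first lra.
  - move=> x hx; apply: h_pos; lra.
  - move=> x hx; apply: h_cont; lra.
lra.
Qed.

Lemma LL_ratio n j : (2 <= n)%N -> (0 < j)%N -> (j * j <= n)%N ->
  INR (LL n) / (INR n * INR n) <= 2 / INR j.
Proof.
move=> hn hj hjn.
set s := Nat.sqrt n.
have hsj : (j <= s)%N.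
  have : (Nat.sqrt (j * j) <= Nat.sqrt n)%coq_nat by apply: Nat.sqrt_le_mono; apply/leP.
  rewrite Nat.sqrt_square. by move/leP.
have [hs1 hs2] := sqrt_facts n. rewrite -/s in hs1 hs2.
have hjR := INR_pos hj.
have hsR : INR j <= INR s by apply: le_INR; apply/leP.
have hnR : 2 <= INR n by rewrite -(INR_IZR_INZ 2); apply: le_INR; apply/leP.
rewrite /LL mult_INR S_INR -/s.
have -> : INR n * (INR s + 1) / (INR n * INR n) = (INR s + 1) / INR n by field; lra.
apply: div_le_l; first lra.
have -> : 2 / INR j * INR n = (2 * INR n) / INR j by field; lra.
apply: div_le_r => //.
have : INR s * INR j <= INR s * INR s by apply: Rmult_le_compat_l; lra.
have hj1 := INR_ge1 j hj.
have : INR j <= INR s * INR j by nra.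
move=> ha hb. nra.
Qed.

Theorem part1 : forall beta : R, 0 < beta < 1 ->
     forall g : R, is_Gamma beta g ->
     forall lam : nat -> R, is_total_rate beta lam ->
       Un_cv (fun n => Rpower (INR n) (2 * (beta - 1)) * lam n)
             (Rpower 2 (beta - 1) * g / (1 - beta)).
Proof.
move=> b hb g hG lam hlam eps he.
have hg : 0 < 1 - b by lra.
have hgp := g_pos b g hb hG.
set P := Rpower 2 (b - 1).
have hP : P = Rpower (/ 2) (1 - b).
  rewrite /P /Rpower ln_Rinv; last lra. congr exp; ring.
have hP0 : 0 < P by apply: Rpower_pos.
have hP1 : P <= 1 by rewrite hP; apply: Rpower_le1; lra.
set e1 := Rmin (g / 2) (eps * (1 - b) / 4).
have he1a : e1 <= g / 2 by apply: Rmin_l.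
have he1b : e1 <= eps * (1 - b) / 4 by apply: Rmin_r.
have he1 : 0 < e1 by apply: Rmin_glb_lt; nra.
have [d [M [hd hlow]]] := gamma_low b g hG e1 he1.
have [eta1 [heta1 hs1]] := Rpower_small (1 - b) (eps * (1 - b) / 3) hg ltac:(nra).
have hc2 : 0 < 3 * (/ (1 - b) + 2) by have := Rinv_0_lt_compat _ hg; lra.
have [eta2 [heta2 hs2]] := Rpower_small (1 - b) (eps / (3 * (/ (1 - b) + 2))) hg ltac:(apply: Rdiv_lt_0_compat; lra).
have [j hj] := nat_above (2 / eta2).
have hj0 : (0 < j)%N.
  have h0 : 0 < 2 / eta2 by apply: Rdiv_lt_0_compat; lra.
  have h : INR 0 < INR j by rewrite /=; lra.
  have := INR_lt 0 j h. by move/ltP.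
have [N1 hN1] := eventually_gt (/ eta1).
have [N2 hN2] := eventually_gt (3 * g / (eps * (1 - b))).
have [N3 hN3] := eventually_gt (2 * M).
exists (maxn (maxn N1 N2) (maxn N3 (maxn 2 (j * j)))) => n hn.
have hn' := hn. move/leP: hn' => hn'.
have hn1 : (N1 <= n)%N by apply: leq_trans hn'; rewrite !leq_max leqnn.
have hn2' : (N2 <= n)%N by apply: leq_trans hn'; rewrite !leq_max leqnn orbT.
have hn3 : (N3 <= n)%N by apply: leq_trans hn'; rewrite !leq_max leqnn orbT.
have hn2 : (2 <= n)%N by apply: leq_trans hn'; rewrite !leq_max leqnn !orbT.
have hnj : (j * j <= n)%N by apply: leq_trans hn'; rewrite !leq_max leqnn !orbT.
have hA1 := hN1 n hn1. have hA2 := hN2 n hn2'. have hA3 := hN3 n hn3.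
have hnR : 2 <= INR n by rewrite -(INR_IZR_INZ 2); apply: le_INR; apply/leP.
have hn0 : 0 < INR n by lra.
set A := Rpower (INR n) (2 * (b - 1)).
have hA0 : 0 < A by apply: Rpower_pos.
have hAe : A = Rpower (/ (INR n * INR n)) (1 - b) by rewrite /A Rpower_combine1.
have hAs : A < eps * (1 - b) / 3.
  rewrite hAe. apply: hs1. apply: Rinv_0_lt_compat; nra.
  have : / (INR n * INR n) <= / INR n by apply: Rinv_le_contravar; nra.
  have : / INR n < eta1.
    have -> : eta1 = / / eta1 by rewrite Rinv_inv.
    apply: Rinv_lt_contravar => //. apply: Rmult_lt_0_compat => //. by apply: Rinv_0_lt_compat.
  lra.
have hm := sn_pos n hn2.
have [hm1 hm2] := sn_ge n hn2.
have hmn : Rpower (sn n / (INR n * INR n)) (1 - b) <= P.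
  rewrite hP. apply: Rle_Rpower_l; first lra. split. apply: Rdiv_lt_0_compat; nra.
  apply: div_le_l; nra.
apply: Rabs_def1.
-
  have hU : lam n <= Rpower (sn n) (1 - b) * g / (1 - b) + 1
     + (Rpower (INR (LL n)) (1 - b) / (1 - b) + 2 * Rpower (INR (LL n)) (1 - b)).
    apply: (lam_le _ _ _ _ (hlam n)) => K. exact: part1_up_all.
  have hLL := LL_ratio n j hn2 hj0 hnj.
  have hL0 : 0 < INR (LL n).
    have [h1 _] := LL_facts n hn2. have : INR n <= INR (LL n) by apply: le_INR; apply/leP. lra.
  have hLs : Rpower (INR (LL n) / (INR n * INR n)) (1 - b) < eps / (3 * (/ (1 - b) + 2)).
    apply: hs2. apply: Rdiv_lt_0_compat; nra.
    apply: Rle_lt_trans hLL _.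
    have : 2 / eta2 < INR j by exact: hj.
    move=> h. have hjR := INR_pos hj0.
    have : 2 < eta2 * INR j.
      have : 2 / eta2 * eta2 < INR j * eta2 by apply: Rmult_lt_compat_r.
      have -> : 2 / eta2 * eta2 = 2 by field; lra. lra.
    move=> h2. apply: (Rmult_lt_reg_r (INR j)) => //.
    have -> : 2 / INR j * INR j = 2 by field; lra. lra.
  have hmL : A * Rpower (INR (LL n)) (1 - b) = Rpower (INR (LL n) / (INR n * INR n)) (1 - b).
    by rewrite /A Rpower_combine.
  have hmm : A * Rpower (sn n) (1 - b) = Rpower (sn n / (INR n * INR n)) (1 - b).
    by rewrite /A Rpower_combine.
  have hX : A * lam n <= Rpower (sn n / (INR n * INR n)) (1 - b) * g / (1 - b) + A
        + Rpower (INR (LL n) / (INR n * INR n)) (1 - b) * (/ (1 - b) + 2).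
    have := Rmult_le_compat_l A _ _ (Rlt_le _ _ hA0) hU.
    rewrite -hmL -hmm. move=> hh. apply: Rle_trans hh _. right. field. lra.
  have h1 : Rpower (sn n / (INR n * INR n)) (1 - b) * g / (1 - b) <= P * g / (1 - b).
    rewrite !Rdiv_def. apply: Rmult_le_compat_r; first by apply: Rlt_le; apply: Rinv_0_lt_compat.
    apply: Rmult_le_compat_r; lra.
  have h2 : Rpower (INR (LL n) / (INR n * INR n)) (1 - b) * (/ (1 - b) + 2) < eps / 3.
    have hc : 0 < / (1 - b) + 2 by have := Rinv_0_lt_compat _ hg; lra.
    have := Rmult_lt_compat_r (/ (1 - b) + 2) _ _ hc hLs.
    have -> : eps / (3 * (/ (1 - b) + 2)) * (/ (1 - b) + 2) = eps / 3 by field; lra.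
    done.
  have h3 : A < eps / 3 by nra.
  rewrite -/A. lra.
- have [K hK] := nat_above (sn n / d).
  have hK0 := pos_INR K.
  have hx0 : 0 < sn n / (INR K + 1) by apply: Rdiv_lt_0_compat; lra.
  have hxd : sn n / (INR K + 1) < d.
    have : sn n < d * (INR K + 1).
      have : sn n / d * d < INR K * d by apply: Rmult_lt_compat_r.
      have -> : sn n / d * d = sn n by field; lra. nra.
    move=> h. apply: (Rmult_lt_reg_r (INR K + 1)); first lra.
    have -> : sn n / (INR K + 1) * (INR K + 1) = sn n by field; lra. lra.
  have hMm : M < sn n by nra.
  have hxm : sn n / (INR K + 1) <= sn n by apply: div_le_l; nra.
  have hl := hlow _ _ hx0 hxd hMm hxm.
  have hlo := part1_low b n (lam n) K hb hn2 (hlam n).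
  have hpm := Rpower_pos (sn n) (1 - b).
  have hlo2 : (Rpower (sn n) (1 - b) * (g - e1) - 1) / (1 - b) <= lam n.
    apply: Rle_trans hlo.
    rewrite !Rdiv_def. apply: Rmult_le_compat_r; first by apply: Rlt_le; apply: Rinv_0_lt_compat.
    have := Rmult_le_compat_l (Rpower (sn n) (1 - b)) _ _ (Rlt_le _ _ hpm) (Rlt_le _ _ hl). lra.
  have hmm : A * Rpower (sn n) (1 - b) = Rpower (sn n / (INR n * INR n)) (1 - b).
    by rewrite /A Rpower_combine.
  set R0 := Rpower (sn n / (INR n * INR n)) (1 - b) in hmm hmn.
  have hY : (R0 * (g - e1) - A) <= A * lam n * (1 - b).
    have := Rmult_le_compat_l A _ _ (Rlt_le _ _ hA0) hlo2.
    have -> : A * ((Rpower (sn n) (1 - b) * (g - e1) - 1) / (1 - b)) = (R0 * (g - e1) - A) / (1 - b).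
      rewrite -hmm. field. lra.
    move=> hh. have := Rmult_le_compat_r (1 - b) _ _ (Rlt_le _ _ hg) hh.
    have -> : (R0 * (g - e1) - A) / (1 - b) * (1 - b) = R0 * (g - e1) - A by field; lra.
    done.
  have hR : (1 - / INR n) * P <= R0.
    have e : sn n / (INR n * INR n) = (1 - / INR n) * / 2 by rewrite /sn; field; lra.
    have hin : / INR n <= / 2 by apply: Rinv_le_contravar; lra.
    have hin0 : 0 < / INR n by apply: Rinv_0_lt_compat.
    rewrite /R0 e -Rpower_mult_distr; [|lra|lra]. rewrite -hP.
    apply: Rmult_le_compat_r; first lra. apply: le_Rpower_small; lra.
  have hgn : g / INR n < eps * (1 - b) / 3.
    apply: (Rmult_lt_reg_r (INR n)) => //.
    have -> : g / INR n * INR n = g by field; lra.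
    have : 3 * g / (eps * (1 - b)) * (eps * (1 - b)) < INR n * (eps * (1 - b)).
      apply: Rmult_lt_compat_r => //; nra.
    have -> : 3 * g / (eps * (1 - b)) * (eps * (1 - b)) = 3 * g by field; nra.
    nra.
  have hge : 0 < g - e1 by lra.
  have h1 : (1 - / INR n) * P * (g - e1) <= R0 * (g - e1) by apply: Rmult_le_compat_r; lra.
  have hin0 : 0 < / INR n by apply: Rinv_0_lt_compat.
  have h2 : (1 - / INR n) * P * (g - e1) >= P * g - e1 - g / INR n.
    have : P * e1 <= e1 by nra.
    have : / INR n * P * (g - e1) <= / INR n * g.
      have : P * (g - e1) <= g by nra.
      move=> hh. rewrite Rmult_assoc. apply: Rmult_le_compat_l; lra.
    rewrite Rdiv_def. nra.
  have hfin : P * g - eps * (1 - b) < A * lam n * (1 - b).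
    nra.
  have : - eps < A * lam n - P * g / (1 - b).
    apply: (Rmult_lt_reg_r (1 - b)) => //.
    have -> : (A * lam n - P * g / (1 - b)) * (1 - b) = A * lam n * (1 - b) - P * g by field; lra.
    lra.
  rewrite -/A. done.
Qed.


Theorem mainTheorem5 :
  (forall beta : R, 0 < beta < 1 ->
     forall g : R, is_Gamma beta g ->
     forall lam : nat -> R, is_total_rate beta lam ->
       Un_cv (fun n => Rpower (INR n) (2 * (beta - 1)) * lam n)
             (Rpower 2 (beta - 1) * g / (1 - beta)))
  /\
  (forall lam : nat -> R, is_total_rate 1 lam ->
       Un_cv (fun n => lam n / ln (INR n)) 2).
Proof. split; [exact: part1 | exact: part2]. Qed.
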